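(* Let $k$ be a field of characteristic zero and let $N$ be a normal subgroup of $GA_3$ containing all diagonal automorphisms of $k^3$. Then the Nagata automorphism $$F=\big(X-2(Y^2+XZ)Y-(Y^2+XZ)^2Z,\ Y+(Y^2+XZ)Z,\ Z\big)$$ belongs to $N$.
   Context: $GA_3$ is the group (under composition) of polynomial automorphisms $G=(G_1,G_2,G_3)$ of $k^3$, with $G_i\in k[X,Y,Z]$. An automorphism is diagonal if it has the form $(c_1X,c_2Y,c_3Z)$ with $c_1,c_2,c_3\in k\setminus\{0\}$. *)

(* Defs.v *)
From HB Require Import structures.
From mathcomp Require Import all_boot all_algebra.
From mathcomp Require Import mpoly.
Set Implicit Arguments. Unset Strict Implicit. Unset Printing Implicit Defensive.
Import GRing.Theory.
Local Open Scope ring_scope.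

(* A polynomial endomorphism G = (G_1,G_2,G_3) of k^3, with G_i in k[X,Y,Z]
   (variables X,Y,Z are 'X_0,'X_1,'X_2 of {mpoly k[3]}). *)
Definition polymap3 (k : fieldType) := 3.-tuple {mpoly k[3]}.

Definition pcomp (k : fieldType) (F G : polymap3 k) : polymap3 k :=
  [tuple comp_mpoly G (tnth F i) | i < 3].

Definition pid (k : fieldType) : polymap3 k := [tuple 'X_i | i < 3].

Definition is_inverse (k : fieldType) (F G : polymap3 k) : Prop :=
  pcomp F G = pid k /\ pcomp G F = pid k.

Definition in_GA3 (k : fieldType) (F : polymap3 k) : Prop :=
  exists G, is_inverse F G.

Definition normal_subgroup_GA3 (k : fieldType) (N : polymap3 k -> Prop) : Prop :=
  [/\ (forall F, N F -> in_GA3 F),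
      N (pid k),
      (forall F G, N F -> N G -> N (pcomp F G)),
      (forall F G, N F -> is_inverse F G -> N G)
    & (forall H Hi F, is_inverse H Hi -> N F -> N (pcomp (pcomp H F) Hi))].

Definition diag_aut (k : fieldType) (c1 c2 c3 : k) : polymap3 k :=
  [tuple c1 *: 'X_0; c2 *: 'X_1; c3 *: 'X_2].

Definition nagata (k : fieldType) : polymap3 k :=
  let X : {mpoly k[3]} := 'X_0 in
  let Y : {mpoly k[3]} := 'X_1 in
  let Z : {mpoly k[3]} := 'X_2 in
  let D := Y ^+ 2 + X * Z in
  [tuple X - 2%:R * D * Y - D ^+ 2 * Z; Y + D * Z; Z].

Definition char0 (k : fieldType) : Prop := [pchar k] =i pred0.

(* Main.v *)
Require Import Defs.
From HB Require Import structures.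
From mathcomp Require Import all_boot all_algebra.
From mathcomp Require Import mpoly ring.
Local Open Scope ring_scope.
Import GRing.Theory.
Section S.
Variable k : fieldType.
Implicit Types (l : 3.-tuple {mpoly k[3]}) (p q : {mpoly k[3]}).
Lemma cD l p q : (p + q) \mPo l = (p \mPo l) + (q \mPo l). Proof. exact: rmorphD. Qed.
Lemma cB l p q : (p - q) \mPo l = (p \mPo l) - (q \mPo l). Proof. exact: rmorphB. Qed.
Lemma cM l p q : (p * q) \mPo l = (p \mPo l) * (q \mPo l). Proof. exact: rmorphM. Qed.
Lemma cX l p n : (p ^+ n) \mPo l = (p \mPo l) ^+ n. Proof. exact: rmorphXn. Qed.
Lemma cN l n : (n%:R : {mpoly k[3]}) \mPo l = n%:R. Proof. exact: rmorph_nat. Qed.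
Lemma cC l c : c%:MP \mPo l = c%:MP. Proof. exact: comp_mpolyC. Qed.
Lemma cXi l i : 'X_i \mPo l = tnth l i. Proof. by rewrite comp_mpolyXU (tnth_nth 0). Qed.
Lemma cO l p : (- p) \mPo l = - (p \mPo l). Proof. exact: rmorphN. Qed.
Definition crw := (cD, cB, cO, cM, cX, cN, cC, cXi).

Lemma tnth_pcomp (F H : polymap3 k) i : tnth (Defs.pcomp F H) i = tnth F i \mPo H.
Proof. by rewrite tnth_mktuple. Qed.

Lemma tuple3_eq (A B : polymap3 k) :
  tnth A 0 = tnth B 0 -> tnth A 1 = tnth B 1 -> tnth A 2%:R = tnth B 2%:R -> A = B.
Proof.
move=> h0 h1 h2; apply: eq_from_tnth => -[[|[|[|//]]] Hi].
- by rewrite (_ : Ordinal Hi = 0) //; apply: val_inj.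
- by rewrite (_ : Ordinal Hi = 1) //; apply: val_inj.
- by rewrite (_ : Ordinal Hi = 2%:R) //; apply: val_inj.
Qed.

Definition G (l : k) : polymap3 k :=
  let X : {mpoly k[3]} := 'X_0 in
  let Y : {mpoly k[3]} := 'X_1 in
  let Z : {mpoly k[3]} := 'X_2 in
  let L : {mpoly k[3]} := l%:MP in
  let D := Y ^+ 2 + X * Z in
  [tuple X - 2%:R * L * D * Y - L^+2 * D ^+ 2 * Z; Y + L * D * Z; Z].

Section GL.
Variable l : k.
Let X : {mpoly k[3]} := 'X_0.
Let Y : {mpoly k[3]} := 'X_1.
Let Z : {mpoly k[3]} := 'X_2.
Let D := Y ^+ 2 + X * Z.
Lemma G0 : tnth (G l) 0 = X - 2%:R * l%:MP * D * Y - (l%:MP)^+2 * D ^+ 2 * Z. Proof. by []. Qed.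
Lemma G1 : tnth (G l) 1 = Y + l%:MP * D * Z. Proof. by []. Qed.
Lemma G2 : tnth (G l) 2%:R = Z. Proof. by []. Qed.
End GL.
Definition Grw := (G0, G1, G2).

Lemma GG a b : Defs.pcomp (G a) (G b) = G (a + b).
Proof.
apply: tuple3_eq; rewrite !tnth_pcomp !Grw !crw !Grw; ring.
Qed.

Lemma comp_assoc p (lr lq : 3.-tuple {mpoly k[3]}) :
  (p \mPo lr) \mPo lq = p \mPo [tuple (tnth lr i \mPo lq) | i < 3].
Proof.
rewrite (comp_mpolyEX p lr) (comp_mpolyEX p) raddf_sum; apply: eq_bigr => m _.
transitivity (p@_m *: (('X_[m] \mPo lr) \mPo lq)); first exact: comp_mpolyZ.
congr (_ *: _); rewrite !comp_mpolyX rmorph_prod; apply: eq_bigr => i _.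
by rewrite rmorphXn tnth_mktuple.
Qed.

Lemma pcompA (A B C : polymap3 k) :
  Defs.pcomp (Defs.pcomp A B) C = Defs.pcomp A (Defs.pcomp B C).
Proof.
apply: eq_from_tnth => i; rewrite !tnth_pcomp comp_assoc; congr comp_mpoly.
Qed.

Lemma D0 (a b c : k) : tnth (diag_aut a b c) 0 = a%:MP * 'X_0. Proof. by rewrite mul_mpolyC. Qed.
Lemma D1 (a b c : k) : tnth (diag_aut a b c) 1 = b%:MP * 'X_1. Proof. by rewrite mul_mpolyC. Qed.
Lemma D2 (a b c : k) : tnth (diag_aut a b c) 2%:R = c%:MP * 'X_2. Proof. by rewrite mul_mpolyC. Qed.
Lemma P0 : tnth (pid k) 0 = 'X_0. Proof. by rewrite tnth_mktuple. Qed.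
Lemma P1 : tnth (pid k) 1 = 'X_1. Proof. by rewrite tnth_mktuple. Qed.
Lemma P2 : tnth (pid k) 2%:R = 'X_2. Proof. by rewrite tnth_mktuple. Qed.
Definition Drw := (D0, D1, D2, P0, P1, P2).

Lemma diag_comp (a b c a' b' c' : k) :
  Defs.pcomp (diag_aut a b c) (diag_aut a' b' c') = diag_aut (a * a') (b * b') (c * c').
Proof. by apply: tuple3_eq; rewrite !tnth_pcomp !Drw !crw !Drw; ring. Qed.

Lemma diag_inv (a b c : k) : a != 0 -> b != 0 -> c != 0 ->
  is_inverse (diag_aut a b c) (diag_aut a^-1 b^-1 c^-1).
Proof.
move=> ha hb hc; split; rewrite diag_comp ?mulfV ?mulVf //;
  apply: tuple3_eq; rewrite !Drw; ring.
Qed.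

Lemma G0pid : G 0 = pid k.
Proof. by apply: tuple3_eq; rewrite !Grw !Drw; ring. Qed.

Lemma G_inv a : is_inverse (G a) (G (- a)).
Proof. by split; rewrite GG ?subrr ?addNr G0pid. Qed.

Lemma conj (u v lam : k) : v * u = 1 ->
  Defs.pcomp (Defs.pcomp (diag_aut 1 v (v ^+ 2)) (G lam)) (diag_aut 1 u (u ^+ 2))
  = G (lam * u ^+ 3).
Proof.
move=> e.
have E : v%:MP * u%:MP = 1 :> {mpoly k[3]} by rewrite -mpolyCM e.
apply: tuple3_eq; rewrite !tnth_pcomp !Drw !crw ?Grw ?crw ?Drw ?Grw.
- ring.
- set V := v%:MP in E *; set U := u%:MP in E *.
  set Dl := ('X_1 ^+ 2 + 'X_0 * 'X_2 : {mpoly k[3]}).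
  transitivity ('X_1 + (lam * u ^+ 3)%:MP * Dl * 'X_2 + (V * U - 1) * ('X_1 + (lam * u ^+ 3)%:MP * Dl * 'X_2)).
    rewrite /U /V /Dl; ring.
  by rewrite E subrr !mul0r addr0.
- set V := v%:MP in E *; set U := u%:MP in E *.
  transitivity ('X_2 + (V * U - 1) * (V * U + 1) * 'X_2 : {mpoly k[3]}).
    rewrite /U /V; ring.
  by rewrite E subrr !mul0r addr0.
Qed.

Lemma key (N : polymap3 k -> Prop) :
  normal_subgroup_GA3 N ->
  (forall c1 c2 c3 : k, c1 != 0 -> c2 != 0 -> c3 != 0 -> N (diag_aut c1 c2 c3)) ->
  forall u : k, u != 0 -> N (G (1 - u ^+ 3)).
Proof.
move=> [_ _ Nc _ Nn] Nd u hu.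
set v := u^-1.
have hv : v != 0 by rewrite invr_eq0.
have vu : v * u = 1 by rewrite mulVf.
have h1 : N (Defs.pcomp (Defs.pcomp (G 1) (diag_aut 1 v (v ^+ 2))) (G (- 1))).
  by apply: Nn; [exact: G_inv | apply: Nd; rewrite ?oner_eq0 ?expf_neq0].
have h2 := Nc _ _ h1 (Nd 1 u (u ^+ 2) (oner_neq0 _) hu (expf_neq0 _ hu)).
move: h2; rewrite !pcompA -(pcompA (diag_aut _ _ _)) conj // GG.
by rewrite mulN1r.
Qed.

End S.

Theorem mainTheorem4 (k : fieldType) (N : polymap3 k -> Prop) :
  char0 k ->
  normal_subgroup_GA3 N ->
  (forall c1 c2 c3 : k, c1 != 0 -> c2 != 0 -> c3 != 0 -> N (diag_aut c1 c2 c3)) ->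
  N (nagata k).
Proof.
move=> ch hN Nd.
have Nc : forall F H, N F -> N H -> N (Defs.pcomp F H) by case: hN.
have two : (2%:R : k) != 0 by move/pcharf0P: ch => ->.
have m1 : (-1 : k) != 0 by rewrite oppr_eq0 oner_eq0.
have A := @key k N hN Nd _ m1.
have B := @key k N hN Nd _ two.
have C := Nc _ _ (Nc _ _ (Nc _ _ A A) (Nc _ _ A A)) B.
rewrite !GG in C.
have -> : nagata k = G k 1.
  apply: val_inj; rewrite /nagata /G /=; congr (_ :: _ :: _ :: _); ring.
have e : 1 - (-1) ^+ 3 + (1 - (-1) ^+ 3) + (1 - (-1) ^+ 3 + (1 - (-1) ^+ 3)) + (1 - 2%:R ^+ 3) = 1 :> k by ring.
by rewrite e in C.
Qed.
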